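(* Let $G=(V,E)$ be a surjective-only finite simple graph with incidence matrix $A$, and let $\lambda\in\mathbb{R}_{>0}^n$ be such that the matching problem $(G,\lambda)$ is stabilizable. Let $\Pi_{\ge0}=\{\mu\in\mathbb{R}_{\ge0}^m:A\mu=\lambda\}$. For $\mu\in\Pi_{\ge0}$, let $\underline{E}=\{k\in E:\mu_k>0\}$ and $\underline{G}=(V,\underline{E})$. Then $\mu$ is a vertex of the polytope $\Pi_{\ge0}$ if and only if $\underline{G}$ is injective.
   Context: Incidence matrix: $a_{i,k}=1$ iff node $i$ is an endpoint of edge $e_k$. A graph is injective if the linear map $y\mapsto Ay$ defined by its incidence matrix is injective, equivalently every connected component is a tree or a unicyclic graph whose cycle is odd. Surjective-only: every connected component is non-bipartite and the graph is not injective. A vertex of a convex polytope $\Upsilon$ is a point $y\in\Upsilon$ that cannot be written as a convex combination of points of $\Upsilon\setminus\{y\}$. Stabilizability of $(G,\lambda)$ (existence of a policy making the matching Markov chain positive recurrent) is, for surjective $G$, equivalent to the existence of $\mu\in\mathbb{R}_{>0}^m$ with $A\mu=\lambda$. *)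

(* Defs.v *)
From mathcomp Require Import all_boot all_order all_algebra.
From mathcomp Require Import reals.
Set Implicit Arguments. Unset Strict Implicit. Unset Printing Implicit Defensive.
Import Order.TTheory GRing.Theory Num.Theory.
Local Open Scope ring_scope.

Definition simple_graph (n m : nat) (e : 'I_m -> 'I_n * 'I_n) : Prop :=
  (forall k, (e k).1 != (e k).2) /\
  (forall k l, [set (e k).1; (e k).2] = [set (e l).1; (e l).2] -> k = l).

Definition incidence (R : nzRingType) (n m : nat) (e : 'I_m -> 'I_n * 'I_n)
  : 'M[R]_(n, m) :=
  \matrix_(i, k) ((i == (e k).1) || (i == (e k).2))%:R.

(* The subgraph (V, S) with edge set S is injective: the map y |-> A_S y
   on R^S is injective (A_S = columns of A indexed by S); vectors in R^S are
   represented as vectors of R^m supported in S. *)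
Definition injective_on (R : realType) (n m : nat) (e : 'I_m -> 'I_n * 'I_n)
  (S : {set 'I_m}) : Prop :=
  forall y : 'cV[R]_m, (forall k, k \notin S -> y k 0 = 0) ->
    incidence R e *m y = 0 -> y = 0.

Definition graph_injective (R : realType) (n m : nat) (e : 'I_m -> 'I_n * 'I_n)
  : Prop := injective_on R e [set: 'I_m].

Definition graph_surjective (R : realType) (n m : nat) (e : 'I_m -> 'I_n * 'I_n)
  : Prop := forall b : 'cV[R]_n, exists y : 'cV[R]_m, incidence R e *m y = b.

Definition surjective_only (R : realType) (n m : nat) (e : 'I_m -> 'I_n * 'I_n)
  : Prop := graph_surjective R e /\ ~ graph_injective R e.

(* Stabilizability of (G, lambda), for surjective G: exists mu > 0, A mu = lambda. *)
Definition stabilizable (R : realType) (n m : nat) (e : 'I_m -> 'I_n * 'I_n)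
  (lam : 'cV[R]_n) : Prop :=
  exists mu : 'cV[R]_m, (forall k, 0 < mu k 0) /\ incidence R e *m mu = lam.

Definition Pi_ge0 (R : realType) (n m : nat) (e : 'I_m -> 'I_n * 'I_n)
  (lam : 'cV[R]_n) : 'cV[R]_m -> Prop :=
  fun mu => (forall k, 0 <= mu k 0) /\ incidence R e *m mu = lam.

Definition is_vertex (R : realType) (m : nat) (P : 'cV[R]_m -> Prop)
  (y : 'cV[R]_m) : Prop :=
  P y /\ ~ (exists (N : nat) (p : 'I_N -> 'cV[R]_m) (w : 'I_N -> R),
              (forall i, P (p i) /\ p i != y) /\ (forall i, 0 <= w i) /\
              \sum_(i < N) w i = 1 /\ \sum_(i < N) w i *: p i = y).

Definition pos_support (R : realType) (m : nat) (mu : 'cV[R]_m) : {set 'I_m} :=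
  [set k | 0 < mu k 0].

(* Main.v *)
Require Import Defs.
From mathcomp Require Import all_boot all_order all_algebra.
From mathcomp Require Import reals.
Import Order.TTheory GRing.Theory Num.Theory.
Local Open Scope ring_scope.

Lemma pos_lb (R : realType) (m : nat) (f : 'I_m -> R) :
  exists2 d : R, 0 < d & forall k, 0 < f k -> d <= f k.
Proof.
suff H : forall s : seq 'I_m, exists2 d : R, 0 < d & forall k, k \in s -> 0 < f k -> d <= f k.
  have [d d0 Hd] := H (enum 'I_m); exists d => // k; apply: Hd; by rewrite mem_enum.
elim=> [|a s [d d0 Hd]]; first by exists 1.
case: (ltrP 0 (f a)) => fa.
  exists (Num.min d (f a)); first by rewrite lt_min d0.
  move=> k; rewrite inE => /orP [/eqP -> _|ks fk]; first by rewrite ge_min lexx orbT.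
  by rewrite ge_min Hd.
exists d => // k; rewrite inE => /orP [/eqP -> fk|ks fk]; last by apply: Hd.
by move: fa; rewrite leNgt fk.
Qed.

Theorem proposition5p6 (R : realType) (n m : nat) (e : 'I_m -> 'I_n * 'I_n)
  (lam : 'cV[R]_n) :
  simple_graph e ->
  surjective_only R e ->
  (forall i, 0 < lam i 0) ->
  stabilizable e lam ->
  forall mu : 'cV[R]_m, Pi_ge0 e lam mu ->
    (is_vertex (Pi_ge0 e lam) mu <-> injective_on R e (pos_support mu)).
Proof.
move=> _ _ _ _ mu Pmu; have [mu0 Amu] := Pmu.
split.
- move=> [_ Hnot] y ysup Ay; apply/eqP/negPn/negP => y0; apply: Hnot.
  have [d d0 Hd] := @pos_lb R m (fun k => mu k 0).
  pose c : R := 1 + \sum_k `|y k 0|.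
  have c0 : 0 < c by rewrite ltr_wpDr // sumr_ge0.
  have yc : forall k, `|y k 0| <= c.
    move=> k; rewrite /c (bigD1 k) //= addrCA lerDl addr_ge0 // sumr_ge0 // =>*; exact: normr_ge0.
  pose eps := d / c.
  have eps0 : 0 < eps by rewrite divr_gt0.
  have key : forall k, eps * `|y k 0| <= mu k 0 \/ y k 0 = 0.
    move=> k; case: (boolP (k \in pos_support mu)) => kS; last by right; apply: ysup.
    left; move: kS; rewrite inE => /Hd dk; apply: le_trans dk.
    rewrite /eps -mulrA; apply: ler_piMr; first exact: ltW. rewrite mulrC ler_pdivrMr // mul1r; exact: yc.
  have eyn : eps *: y != 0 by rewrite scaler_eq0 negb_or y0 andbT gt_eqF.
  exists 2, (fun i => if i == ord0 then mu + eps *: y else mu - eps *: y), (fun _ => 1/2).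
  split; [|split; [by move=> i; rewrite divr_ge0|split]].
  + move=> i; case: (i == ord0); (split; [split|]).
    * move=> k; rewrite !mxE; case: (key k) => [h|->]; last by rewrite mulr0 addr0.
      rewrite -lerBlDr sub0r; apply: le_trans h; rewrite lerNl -mulrN ler_wpM2l ?(ltW eps0) // lerNl -normrN; exact: ler_norm.
    * by rewrite mulmxDr -scalemxAr Ay scaler0 addr0.
    * by rewrite -subr_eq0 addrC addKr.
    * move=> k; rewrite !mxE; case: (key k) => [h|->]; last by rewrite mulr0 subr0.
      rewrite subr_ge0; apply: le_trans h; apply: ler_wpM2l; [exact: ltW | exact: ler_norm].
    * by rewrite mulmxBr -scalemxAr Ay scaler0 subr0.
    * by rewrite -subr_eq0 addrC addKr oppr_eq0.
  + by rewrite big_ord_recr big_ord1 /= -splitr.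
  + rewrite big_ord_recr big_ord1 /=.
    by rewrite -scalerDr addrACA subrr addr0 -mulr2n -scaler_nat scalerA mul1r mulVf ?pnatr_eq0 // scale1r.
- move=> inj; split => // [[N [p [w [Hp [w0 [w1 wp]]]]]]].
  have [i wi]: exists i, w i != 0.
    case: (pickP (fun i => w i != 0)) => [i wi|H]; first by exists i.
    move: w1; rewrite big1 => [/eqP|j _]; first by rewrite eq_sym oner_eq0.
    by move: (H j) => /negbFE/eqP.
  have [[pi0 Api] pin] := Hp i.
  apply/(negP pin); rewrite -subr_eq0; apply/eqP; apply: inj.
  + move=> k; rewrite inE -leNgt => muk.
    have mk0 : mu k 0 = 0 by apply/le_anti; rewrite muk mu0.
    rewrite !mxE mk0 subr0.
    have : (\sum_j w j *: p j) k 0 = 0 by rewrite wp.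
    rewrite summxE => Hs.
    have : w i * p i k 0 = 0.
      have := @psumr_eq0P _ _ xpredT (fun j => (w j *: p j) k 0).
      move=> /(_ _ Hs i isT); rewrite mxE; apply => j _.
      by rewrite mxE mulr_ge0 // (Hp j).1.1.
    by move/eqP; rewrite mulf_eq0 (negbTE wi) /= => /eqP.
  + by rewrite mulmxBr Api Amu subrr.
Qed.
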